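(* Let $A=(a_{jk})\in\mathbb C^{4\times 4}$ be a hermitian matrix such that $\bar zAz^T\geq 0$ for all $z\in\mathbb C^4$ with $z_1z_4+z_2z_3=0$. Then $$\sum_{j,k=1}^{4}a_{jk}\,a_{5-j,5-k}\geq 0.$$ *)

(* Defs.v *)
From HB Require Import structures.
From mathcomp Require Import all_boot all_order all_algebra.
From mathcomp Require Import complex.
From mathcomp Require Import reals.
Set Implicit Arguments. Unset Strict Implicit. Unset Printing Implicit Defensive.
Import Order.TTheory GRing.Theory Num.Theory.
Local Open Scope ring_scope.

Definition hermitian_mx (C : numClosedFieldType) (n : nat) (A : 'M[C]_n) : Prop :=
  forall j k : 'I_n, A j k = (A k j)^*.

Definition herm_form (C : numClosedFieldType) (n : nat) (A : 'M[C]_n) (z : 'rV[C]_n) : C :=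
  \sum_(j < n) \sum_(k < n) (z 0 j)^* * A j k * z 0 k.

(* Main.v *)
Require Import Defs.
From HB Require Import structures.
From mathcomp Require Import all_boot all_order all_algebra.
From mathcomp Require Import complex.
From mathcomp Require Import reals.
From mathcomp Require Import ring lra.
Import Order.TTheory GRing.Theory Num.Theory.
Local Open Scope ring_scope.

Section RealPart.
Variable R : realType.
Variables (a c1 c2 c3 r1 r2 r3 t11 t12 t13 t21 t22 t23 t31 t32 t33 : R).

Definition K (X0 X1 X2 X3 Y0 Y1 Y2 Y3 : R) :=
  a*X0*Y0 + Y0*(c1*X1+c2*X2+c3*X3) + X0*(r1*Y1+r2*Y2+r3*Y3)
  + (X1*(t11*Y1+t12*Y2+t13*Y3) + X2*(t21*Y1+t22*Y2+t23*Y3) + X3*(t31*Y1+t32*Y2+t33*Y3)).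

Hypothesis Hsp : forall al be ga de ep ze : R,
  0 <= K (al^+2+be^+2+ga^+2) (2*al*be) (2*al*ga) (al^+2-be^+2-ga^+2)
         (de^+2+ep^+2+ze^+2) (2*de*ep) (2*de*ze) (de^+2-ep^+2-ze^+2).

Lemma KsL k X0 X1 X2 X3 Y0 Y1 Y2 Y3 :
  K (k*X0) (k*X1) (k*X2) (k*X3) Y0 Y1 Y2 Y3 = k * K X0 X1 X2 X3 Y0 Y1 Y2 Y3.
Proof. rewrite /K; ring. Qed.
Lemma KsR k X0 X1 X2 X3 Y0 Y1 Y2 Y3 :
  K X0 X1 X2 X3 (k*Y0) (k*Y1) (k*Y2) (k*Y3) = k * K X0 X1 X2 X3 Y0 Y1 Y2 Y3.
Proof. rewrite /K; ring. Qed.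

Lemma spinor (rho N1 N2 N3 : R) : 0 <= rho -> rho^+2 = N1^+2+N2^+2+N3^+2 ->
  (exists al be ga k, 0 < k /\
     [/\ al^+2+be^+2+ga^+2 = k*rho, 2*al*be = k*N1, 2*al*ga = k*N2 &
         al^+2-be^+2-ga^+2 = k*N3])
  \/ (N1 = 0 /\ N2 = 0 /\ N3 = -rho).
Proof.
move=> hr he.
have h3 : 0 <= rho + N3 by nra.
case: (ltrgt0P (rho + N3)) h3 => [hp|hn|hz] h3.
- left; exists (rho+N3), N1, N2, (2*(rho+N3)); split; first nra.
  split; nra.
- exfalso; lra.
- right; nra.
Qed.
Lemma K_left (rho N1 N2 N3 de ep ze : R) : 0 <= rho -> rho^+2 = N1^+2+N2^+2+N3^+2 ->
  0 <= K rho N1 N2 N3 (de^+2+ep^+2+ze^+2) (2*de*ep) (2*de*ze) (de^+2-ep^+2-ze^+2).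
Proof.
move=> hr he; case: (@spinor rho N1 N2 N3 hr he) => [[al [be [ga [k [hk [e0 e1 e2 e3]]]]]]|[e1 [e2 e3]]].
- have := Hsp al be ga de ep ze; rewrite e0 e1 e2 e3 KsL.
  by rewrite pmulr_rge0.
- have := Hsp 0 1 0 de ep ze; rewrite e1 e2 e3.
  have -> : K rho 0 0 (-rho) = K (rho*1) (rho*0) (rho*0) (rho*(-1)) by congr K; ring.
  rewrite KsL => h; apply: mulr_ge0 => //.
  move: h; congr (0 <= K _ _ _ _ _ _ _ _); ring.
Qed.

Lemma K_valid (rho N1 N2 N3 sg M1 M2 M3 : R) : 0 <= rho -> rho^+2 = N1^+2+N2^+2+N3^+2 ->
  0 <= sg -> sg^+2 = M1^+2+M2^+2+M3^+2 ->
  0 <= K rho N1 N2 N3 sg M1 M2 M3.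
Proof.
move=> hr he hs hm; case: (@spinor sg M1 M2 M3 hs hm) => [[al [be [ga [k [hk [e0 e1 e2 e3]]]]]]|[e1 [e2 e3]]].
- have := @K_left rho N1 N2 N3 al be ga hr he; rewrite e0 e1 e2 e3 KsR.
  by rewrite pmulr_rge0.
- have := @K_left rho N1 N2 N3 0 1 0 hr he; rewrite e1 e2 e3.
  have -> : K rho N1 N2 N3 sg 0 0 (-sg) = K rho N1 N2 N3 (sg*1) (sg*0) (sg*0) (sg*(-1)) by congr K; ring.
  rewrite KsR => h; apply: mulr_ge0 => //.
  move: h; congr (0 <= K _ _ _ _ _ _ _ _); ring.
Qed.

Lemma cs3 (x1 x2 x3 y1 y2 y3 : R) :
  (x1*y1+x2*y2+x3*y3)^+2 <= (x1^+2+x2^+2+x3^+2)*(y1^+2+y2^+2+y3^+2).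
Proof.
have -> : (x1^+2+x2^+2+x3^+2)*(y1^+2+y2^+2+y3^+2) =
  (x1*y1+x2*y2+x3*y3)^+2 + ((x1*y2-x2*y1)^+2 + (x1*y3-x3*y1)^+2 + (x2*y3-x3*y2)^+2) by ring.
by rewrite lerDl !addr_ge0 ?sqr_ge0.
Qed.

Let cc := c1^+2+c2^+2+c3^+2.
Let rr := r1^+2+r2^+2+r3^+2.
Let TT := (t11^+2+t12^+2+t13^+2) + (t21^+2+t22^+2+t23^+2) + (t31^+2+t32^+2+t33^+2).
Let tau := c1*(t11*r1+t12*r2+t13*r3) + c2*(t21*r1+t22*r2+t23*r3) + c3*(t31*r1+t32*r2+t33*r3).

Lemma tau_cs : tau^+2 <= cc * rr * TT.
Proof.
have h1 := cs3 c1 c2 c3 (t11*r1+t12*r2+t13*r3) (t21*r1+t22*r2+t23*r3) (t31*r1+t32*r2+t33*r3).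
have v1 := cs3 t11 t12 t13 r1 r2 r3.
have v2 := cs3 t21 t22 t23 r1 r2 r3.
have v3 := cs3 t31 t32 t33 r1 r2 r3.
apply: (le_trans h1); rewrite -mulrA; apply: ler_wpM2l.
  by rewrite /cc !addr_ge0 ?sqr_ge0.
rewrite /TT /rr; lra.
Qed.

Lemma real_main : 0 <= a^+2 - cc - rr + TT.
Proof.
have hcc : 0 <= cc by rewrite /cc !addr_ge0 ?sqr_ge0.
have hrr : 0 <= rr by rewrite /rr !addr_ge0 ?sqr_ge0.
have hTT : 0 <= TT by rewrite /TT !addr_ge0 ?sqr_ge0.
pose gc := Num.sqrt cc; pose gr := Num.sqrt rr.
have hgc : 0 <= gc by apply: sqrtr_ge0.
have hgr : 0 <= gr by apply: sqrtr_ge0.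
have egc : gc^+2 = cc by rewrite sqr_sqrtr.
have egr : gr^+2 = rr by rewrite sqr_sqrtr.
have v0 : (1:R)^+2 = 1^+2 + 0^+2 + 0^+2 by rewrite expr0n addr0 addr0.
have v1 : (1:R)^+2 = (-1)^+2 + 0^+2 + 0^+2 by rewrite expr0n addr0 addr0 sqrrN.
have vc : gc^+2 = (-c1)^+2+(-c2)^+2+(-c3)^+2 by rewrite !sqrrN.
have vr : gr^+2 = (-r1)^+2+(-r2)^+2+(-r3)^+2 by rewrite !sqrrN.
have [pc|zc] : 0 < gc \/ 0 = gc by move: hgc; rewrite le_eqVlt => /orP[/eqP|]; [right|left].
all: have [pr|zr] : 0 < gr \/ 0 = gr by move: hgr; rewrite le_eqVlt => /orP[/eqP|]; [right|left].
-
  have vr' : gr^+2 = r1^+2+r2^+2+r3^+2 by [].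
  have vc' : gc^+2 = c1^+2+c2^+2+c3^+2 by [].
  have k1 := @K_valid gc (-c1) (-c2) (-c3) gr (-r1) (-r2) (-r3) hgc vc hgr vr.
  have k2 := @K_valid gc (-c1) (-c2) (-c3) gr r1 r2 r3 hgc vc hgr vr'.
  have k3 := @K_valid gc c1 c2 c3 gr (-r1) (-r2) (-r3) hgc vc' hgr vr.
  set P := gc * gr.
  have hP : 0 < P by rewrite /P; exact: mulr_gt0 pc pr.
  have A1 : P*(gc+gr) <= P*a + tau.
    move: k1; have -> : K gc (-c1) (-c2) (-c3) gr (-r1) (-r2) (-r3) =
        P*a - gr * gc^+2 - gc * gr^+2 + tau by rewrite egc egr /K /P /cc /rr /tau; ring.
    rewrite /P => k1; lra.
  have A2 : P*(gc-gr) <= P*a - tau.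
    move: k2; have -> : K gc (-c1) (-c2) (-c3) gr r1 r2 r3 =
        P*a - gr * gc^+2 + gc * gr^+2 - tau by rewrite egc egr /K /P /cc /rr /tau; ring.
    rewrite /P => k2; lra.
  have A3 : P*(gr-gc) <= P*a - tau.
    move: k3; have -> : K gc c1 c2 c3 gr (-r1) (-r2) (-r3) =
        P*a + gr * gc^+2 - gc * gr^+2 - tau by rewrite egc egr /K /P /cc /rr /tau; ring.
    rewrite /P => k3; lra.
  have hs : 0 <= P*(gc+gr) by apply: mulr_ge0; lra.
  have B1 : (P*(gc+gr))^+2 <= (P*a+tau)^+2 by nra.
  have B2 : (P*(gc-gr))^+2 <= (P*a-tau)^+2 by nra.
  have C : tau^+2 <= P^+2 * TT.
    by rewrite /P exprMn egc egr; apply: tau_cs.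
  have D : 0 <= P^+2 * (a^+2 - gc^+2 - gr^+2 + TT) by nra.
  by move: D; rewrite pmulr_rge0 ?exprn_gt0 // egc egr.
-
  have err : rr = 0 by rewrite -egr -zr expr2 mul0r.
  have hr1 : r1 = 0.
    have : r1^+2 <= 0 by move: err; rewrite /rr => err; nra.
    by move=> h; apply/eqP; rewrite -sqrf_eq0 eq_le h sqr_ge0.
  have k1 := @K_valid gc (-c1) (-c2) (-c3) 1 1 0 0 hgc vc ler01 v0.
  have k2 := @K_valid gc (-c1) (-c2) (-c3) 1 (-1) 0 0 hgc vc ler01 v1.
  have h : 0 <= gc*(a-gc).
    move: k1 k2; rewrite /K hr1 => k1 k2.
    have e : gc^+2 = c1^+2+c2^+2+c3^+2 by [].
    nra.
  have ha : gc <= a by move: h; rewrite pmulr_rge0 // subr_ge0.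
  rewrite err -egc; nra.
-
  have ecc : cc = 0 by rewrite -egc -zc expr2 mul0r.
  have hc1 : c1 = 0.
    have : c1^+2 <= 0 by move: ecc; rewrite /cc => ecc; nra.
    by move=> h; apply/eqP; rewrite -sqrf_eq0 eq_le h sqr_ge0.
  have k1 := @K_valid 1 1 0 0 gr (-r1) (-r2) (-r3) ler01 v0 hgr vr.
  have k2 := @K_valid 1 (-1) 0 0 gr (-r1) (-r2) (-r3) ler01 v1 hgr vr.
  have h : 0 <= gr*(a-gr).
    move: k1 k2; rewrite /K hc1 => k1 k2.
    have e : gr^+2 = r1^+2+r2^+2+r3^+2 by [].
    nra.
  have ha : gr <= a by move: h; rewrite pmulr_rge0 // subr_ge0.
  rewrite ecc -egr; nra.
- have ecc : cc = 0 by rewrite -egc -zc expr2 mul0r.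
  have err : rr = 0 by rewrite -egr -zr expr2 mul0r.
  rewrite ecc err !subr0; apply: addr_ge0 => //; exact: sqr_ge0.
Qed.
End RealPart.

Section Cplx.
Variable R : realType.
Lemma sum4 (F : 'I_4 -> R[i]) : \sum_(j < 4) F j = F 0 + F 1 + F 2 + F 3.
Proof.
rewrite !big_ord_recr big_ord0 /= add0r.
by repeat f_equal; apply: val_inj.
Qed.
Lemma conjE (a b : R) : (Complex a b)^* = Complex a (-b).
Proof. reflexivity. Qed.
Lemma mulE (a b c d : R) : Complex a b * Complex c d = Complex (a*c - b*d) (a*d + b*c).
Proof. reflexivity. Qed.
Lemma addE (a b c d : R) : Complex a b + Complex c d = Complex (a+c) (b+d).
Proof. reflexivity. Qed.
Lemma oppE (a b : R) : - Complex a b = Complex (-a) (-b).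
Proof. reflexivity. Qed.
Lemma revE : (rev_ord (0:'I_4) = 3) * (rev_ord (1:'I_4) = 2) * (rev_ord (2:'I_4) = 1) * (rev_ord (3:'I_4) = 0).
Proof. by do !split; apply: val_inj. Qed.
End Cplx.

Theorem theorem7 (R : realType) (A : 'M[R[i]]_4) :
  hermitian_mx A ->
  (forall z : 'rV[R[i]]_4,
      z 0 0 * z 0 3 + z 0 1 * z 0 2 = 0 -> 0 <= herm_form A z) ->
  0 <= \sum_(j < 4) \sum_(k < 4) A j k * A (rev_ord j) (rev_ord k).
Proof.
move=> hA H.
have dg (j : 'I_4) : exists d, A j j = Complex d 0.
  move: (hA j j); case: (A j j) => x y [] h; exists x; congr Complex; lra.
have od (j k : 'I_4) : exists p q, A j k = Complex p q /\ A k j = Complex p (-q).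
  case E: (A j k) => [p q]; exists p, q; split => //; by rewrite hA E.
have [d0 e00] := dg 0; have [d1 e11] := dg 1; have [d2 e22] := dg 2; have [d3 e33] := dg 3.
have [p01 [q01 [e01 e10]]] := od 0 1.
have [p02 [q02 [e02 e20]]] := od 0 2.
have [p03 [q03 [e03 e30]]] := od 0 3.
have [p12 [q12 [e12 e21]]] := od 1 2.
have [p13 [q13 [e13 e31]]] := od 1 3.
have [p23 [q23 [e23 e32]]] := od 2 3.
pose xa : R := d0+d1+d2+d3.
pose xc1 : R := 2*(p13-p02).
pose xc2 : R := 2*(q02-q13).
pose xc3 : R := d0+d1-d2-d3.
pose xr1 : R := 2*(p01-p23).
pose xr2 : R := 2*(q23-q01).
pose xr3 : R := d0-d1+d2-d3.
pose x11 : R := 2*(p03-p12).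
pose x12 : R := -(2*q03+2*q12).
pose x13 : R := -(2* p02+2* p13).
pose x21 : R := 2*q12-2*q03.
pose x22 : R := -(2* p03+2* p12).
pose x23 : R := 2*q02+2*q13.
pose x31 : R := 2* p01+2* p23.
pose x32 : R := -(2*q01+2*q23).
pose x33 : R := d0-d1-d2+d3.
have Hsp : forall al be ga de ep ze : R,
  0 <= @K R xa xc1 xc2 xc3 xr1 xr2 xr3 x11 x12 x13 x21 x22 x23 x31 x32 x33 (al^+2+be^+2+ga^+2) (2*al*be) (2*al*ga) (al^+2-be^+2-ga^+2)
         (de^+2+ep^+2+ze^+2) (2*de*ep) (2*de*ze) (de^+2-ep^+2-ze^+2).
  move=> al be ga de ep ze.
  pose u1 : R[i] := Complex al 0; pose u2 : R[i] := Complex be ga.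
  pose v1 : R[i] := Complex de 0; pose v2 : R[i] := Complex ep ze.
  pose z := \row_(j < 4) nth 0 [:: u1*v1; u1*v2; -(u2*v1); u2*v2] j.
  have hz : z 0 0 * z 0 3 + z 0 1 * z 0 2 = 0 by rewrite !mxE /=; ring.
  have := H z hz.
  rewrite /herm_form !sum4 !mxE /= e00 e11 e22 e33 e01 e10 e02 e20 e03 e30 e12 e21 e13 e31 e23 e32.
  rewrite /u1 /u2 /v1 /v2 !(mulE, addE, conjE, oppE) lecE /= => /andP[_ h].
  rewrite /K /xa /xc1 /xc2 /xc3 /xr1 /xr2 /xr3 /x11 /x12 /x13 /x21 /x22 /x23 /x31 /x32 /x33; lra.
have hm := @real_main R xa xc1 xc2 xc3 xr1 xr2 xr3 x11 x12 x13 x21 x22 x23 x31 x32 x33 Hsp.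
rewrite !sum4 !revE e00 e11 e22 e33 e01 e10 e02 e20 e03 e30 e12 e21 e13 e31 e23 e32.
rewrite !(mulE, addE, conjE, oppE) lecE /=; apply/andP; split.
  apply/eqP; ring.
move: hm; rewrite /xa /xc1 /xc2 /xc3 /xr1 /xr2 /xr3 /x11 /x12 /x13 /x21 /x22 /x23 /x31 /x32 /x33 => hm.
lra.
Qed.
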